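(* Let $\mathcal{M}_1=(E_1,\mathcal{B}_1)$ and $\mathcal{M}_2=(E_2,\mathcal{B}_2)$ be matroids with $E_1\cap E_2=\{p\}$, where $p$ is not a coloop of both. Let $E_1\uplus E_2=(E_1\cup E_2\cup\{p_1,p_2\})\setminus\{p\}$, where $p_i$ plays the role of $p$ in $E_i$, so that $P_{\mathcal{M}_1}\times P_{\mathcal{M}_2}\subset\mathbb{R}^{E_1\uplus E_2}$. Then the base polytope of the series connection $\mathcal{S}(\mathcal{M}_1,\mathcal{M}_2)$ is linearly isomorphic to $(P_{\mathcal{M}_1}\times P_{\mathcal{M}_2})\cap\{x\in\mathbb{R}^{E_1\uplus E_2}: x_{p_1}+x_{p_2}\le 1\}$.
   Context: For a matroid $\mathcal{M}=(E,\mathcal{B})$, the base polytope is $P_{\mathcal{M}}=\operatorname{conv}\{\mathbf{1}_B:B\in\mathcal{B}\}\subset\mathbb{R}^E$. For $\mathcal{M}_1,\mathcal{M}_2$ as in the claim, the series connection $\mathcal{S}(\mathcal{M}_1,\mathcal{M}_2)$ is the matroid on $E_1\cup E_2$ with bases $\{B_1\cup B_2: B_1\in\mathcal{B}_1, B_2\in\mathcal{B}_2, B_1\cap B_2=\emptyset\}$. *)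

(* Defs.v *)
From HB Require Import structures.
From mathcomp Require Import all_boot all_order all_algebra.
Set Implicit Arguments. Unset Strict Implicit. Unset Printing Implicit Defensive.
Import Order.TTheory GRing.Theory Num.Theory.
Local Open Scope ring_scope.

Definition is_matroid (T : finType) (E : {set T}) (Bs : {set {set T}}) : Prop :=
  [/\ Bs != set0,
      (forall B, B \in Bs -> B \subset E) &
      (forall B1 B2, B1 \in Bs -> B2 \in Bs -> forall x, x \in B1 :\: B2 ->
         exists2 y, y \in B2 :\: B1 & y |: (B1 :\ x) \in Bs)].

Definition is_coloop (T : finType) (Bs : {set {set T}}) (p : T) : Prop :=
  forall B, B \in Bs -> p \in B.

Definition series_bases (T : finType) (Bs1 Bs2 : {set {set T}}) : {set {set T}} :=
  [set B1 :|: B2 | B1 in Bs1, B2 in Bs2 & [disjoint B1 & B2]].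

Definition conv (R : numDomainType) (V : lmodType R) (S : seq V) : V -> Prop :=
  fun x => exists w : V -> R,
    [/\ forall v, 0 <= w v, \sum_(v <- S) w v = 1 & x = \sum_(v <- S) w v *: v].

Definition indic (R : numDomainType) (T : finType) (E : {set T}) (B : {set T})
  : {ffun {x : T | x \in E} -> R^o} := [ffun x => ((val x \in B)%:R : R)].

Definition base_polytope (R : numDomainType) (T : finType) (E : {set T})
  (Bs : {set {set T}}) : {ffun {x : T | x \in E} -> R^o} -> Prop :=
  conv [seq indic R E B | B <- enum Bs].

(* R^(E1 ⊎ E2): coordinates indexed by the disjoint union of E1 and E2, so the
   copy of p in E1 is p1 = inl p and its copy in E2 is p2 = inr p. *)
Definition dsum_vec (R : numDomainType) (T : finType) (E1 E2 : {set T}) :=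
  {ffun ({x : T | x \in E1} + {x : T | x \in E2})%type -> R^o}.

Definition prod_cut (R : numDomainType) (T : finType) (E1 E2 : {set T})
  (P1 : {ffun {x : T | x \in E1} -> R^o} -> Prop)
  (P2 : {ffun {x : T | x \in E2} -> R^o} -> Prop)
  (p1 : {x : T | x \in E1}) (p2 : {x : T | x \in E2}) : dsum_vec R E1 E2 -> Prop :=
  fun x => [/\ P1 [ffun e => x (inl e)], P2 [ffun e => x (inr e)]
             & (x (inl p1) : R) + (x (inr p2) : R) <= 1].

Definition lin_iso (R : numDomainType) (U V : lmodType R) (P : U -> Prop) (Q : V -> Prop)
  : Prop :=
  exists f : U -> V,
    [/\ forall a u v, f (a *: u + v) = a *: f u + f v,
        forall x y, P x -> P y -> f x = f y -> x = y &
        forall y, Q y <-> exists2 x, P x & f x = y].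

Arguments base_polytope R {T} E Bs _.
Arguments indic R {T} E B.

(* Main.v *)
Require Import Defs.
From HB Require Import structures.
From mathcomp Require Import all_boot all_order all_algebra ring lra.
Set Implicit Arguments. Unset Strict Implicit. Unset Printing Implicit Defensive.
Import Order.TTheory GRing.Theory Num.Theory.
Local Open Scope ring_scope.

Definition gext (R : numDomainType) (T : finType) (E : {set T})
  (x : {ffun {x : T | x \in E} -> R^o}) (t : T) : R :=
  if insub t is Some u then x u else 0.

Lemma gext_val (R : numDomainType) (T : finType) (E : {set T})
  (x : {ffun {x : T | x \in E} -> R^o}) u : gext x (val u) = x u.
Proof. by rewrite /gext valK. Qed.

Lemma gext_indic (R : numDomainType) (T : finType) (E B : {set T}) t :
  gext (indic R E B) t = ((t \in E) && (t \in B))%:R.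
Proof.
rewrite /gext; case: insubP => [u -> <-|/negbTE -> //]; by rewrite ffunE.
Qed.

Lemma gext_lin (R : numDomainType) (T : finType) (E : {set T})
  (a : R) (u v : {ffun {x : T | x \in E} -> R^o}) t :
  gext (a *: u + v) t = a * gext u t + gext v t.
Proof. rewrite /gext; case: insubP => [w _ _|_]; last by rewrite mulr0 addr0.
by rewrite !ffunE. Qed.

Lemma gext_sum (R : numDomainType) (T : finType) (E : {set T}) (I : finType)
  (P : pred I) (c : I -> R) (F : I -> {ffun {x : T | x \in E} -> R^o}) t :
  gext (\sum_(i | P i) c i *: F i) t = \sum_(i | P i) c i * gext (F i) t.
Proof.
rewrite /gext; case: insubP => [w _ _|_]; last by rewrite big1 // => i _; rewrite mulr0.
rewrite sum_ffunE; apply: eq_bigr => i _; by rewrite ffunE.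
Qed.

Lemma sum_indic (R : numDomainType) (T : finType) (A : {set T}) :
  \sum_(t : T) ((t \in A)%:R : R) = #|A|%:R.
Proof.
rewrite (bigID (mem A)) /= [X in _ + X]big1 ?addr0; last by move=> t /negbTE ->.
by rewrite (eq_bigr (fun _ => 1)) => [|t ->//]; rewrite sumr_const.
Qed.
Definition convB (R : numDomainType) (T : finType) (E : {set T}) (Bs : {set {set T}})
  (x : {ffun {x : T | x \in E} -> R^o}) : Prop :=
  exists c : {set T} -> R, [/\ forall B, 0 <= c B, \sum_(B in Bs) c B = 1 &
     x = \sum_(B in Bs) c B *: indic R E B].
Arguments convB {R T} E Bs x.

Lemma indic_inj (R : numDomainType) (T : finType) (E B B' : {set T}) :
  B \subset E -> B' \subset E -> indic R E B = indic R E B' -> B = B'.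
Proof.
move=> sB sB' /ffunP eq; apply/setP => t.
case tE: (t \in E); last first.
  by rewrite (negbTE (contraFN (fun h => subsetP sB t h) tE))
             (negbTE (contraFN (fun h => subsetP sB' t h) tE)).
have := eq (exist _ t tE); rewrite !ffunE /=.
by case: (t \in B); case: (t \in B') => //= /eqP; rewrite ?oner_eq0 // eq_sym oner_eq0.
Qed.

Lemma bp_convB (R : numDomainType) (T : finType) (E : {set T}) (Bs : {set {set T}}) x :
  (forall B, B \in Bs -> B \subset E) ->
  base_polytope R E Bs x <-> convB E Bs x.
Proof.
move=> sub; split.
  case=> w [w0 w1 wx]; exists (fun B => w (indic R E B)); split => //.
    by rewrite -w1 big_map big_enum.
  by rewrite wx big_map big_enum.
case=> c [c0 c1 cx].
exists (fun v => if [pick B in Bs | indic R E B == v] is Some B then c B else 0).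
have key : forall B, B \in Bs ->
   (if [pick B' in Bs | indic R E B' == indic R E B] is Some B' then c B' else 0) = c B.
  move=> B BB; case: pickP => [B' /andP[B'B /eqP e]|/(_ B)]; last by rewrite BB eqxx.
  by rewrite (indic_inj (sub _ B'B) (sub _ BB) e).
split.
- by move=> v; case: pickP.
- by rewrite big_map big_enum -c1; apply: eq_bigr => B /key.
- by rewrite big_map big_enum cx; apply: eq_bigr => B /key ->.
Qed.

Lemma bases_card (T : finType) (E : {set T}) (Bs : {set {set T}}) :
  is_matroid E Bs -> forall B1 B2, B1 \in Bs -> B2 \in Bs -> #|B1| = #|B2|.
Proof.
case=> _ _ ex.
suff H : forall n B1 B2, #|B1 :\: B2| = n -> B1 \in Bs -> B2 \in Bs -> #|B1| = #|B2|.
  by move=> B1 B2; apply: H.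
elim=> [|n IH] B1 B2 hn b1 b2.
  move/eqP: hn; rewrite cards_eq0 setD_eq0 => s12.
  case: (set_0Vmem (B2 :\: B1)) => [/eqP|[x xin]].
    by rewrite setD_eq0 => s21; rewrite (eqP (_ : B1 == B2)) // eqEsubset s12.
  have [y /setDP[yB1 yB2] _] := ex _ _ b2 b1 x xin.
  by rewrite (subsetP s12 _ yB1) in yB2.
have [x xin] : exists x, x \in B1 :\: B2.
  by apply/set0Pn; rewrite -card_gt0 hn.
have [y yin yB] := ex _ _ b1 b2 x xin.
move: xin yin; rewrite !inE => /andP[xB2 xB1] /andP[yB1 yB2].
rewrite -(IH (y |: (B1 :\ x)) B2) //.
  rewrite cardsU1 !inE (negbTE yB1) andbF /=.
  by rewrite (cardsD1 x B1) xB1.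
have -> : (y |: B1 :\ x) :\: B2 = (B1 :\: B2) :\ x.
  apply/setP => t; rewrite !inE.
  case: (eqVneq t y) => [->|_] /=; first by rewrite yB2 /= andbF.
  by case: (t \in B2); case: (t != x); case: (t \in B1).
by move: hn; rewrite (cardsD1 x (B1 :\: B2)) !inE xB2 xB1 => -[] <-.
Qed.

Definition rk (T : finType) (Bs : {set {set T}}) : nat :=
  if [pick B in Bs] is Some B then #|B| else 0.

Lemma rkE (T : finType) (E : {set T}) (Bs : {set {set T}}) B :
  is_matroid E Bs -> B \in Bs -> #|B| = rk Bs.
Proof.
move=> M BB; rewrite /rk; case: pickP => [B' B'B|/(_ B)]; last by rewrite BB.
exact: bases_card M _ _ BB B'B.
Qed.

Lemma sum_indic_in (R : numDomainType) (T : finType) (A B : {set T}) :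
  \sum_(t in A) ((t \in B)%:R : R) = #|A :&: B|%:R.
Proof.
rewrite big_mkcond -sum_indic; apply: eq_bigr => t _; rewrite inE.
by case: (t \in A).
Qed.

Definition comp (R : numDomainType) (T : finType) (E : {set T}) (p : T)
  (Ea : {set T}) (r rt : nat) (x : {ffun {x : T | x \in E} -> R^o})
  (e : {x : T | x \in Ea}) : R :=
  if val e == p then (r%:R / rt%:R) * \sum_(t : T) gext x t
                     - \sum_(t in Ea :\ p) gext x t
  else gext x (val e).

Lemma compV (R : numFieldType) (T : finType) (E : {set T}) (p : T)
  (Ea B Ba Bb : {set T}) (r rt : nat) (e : {x : T | x \in Ea}) :
  B = Ba :|: Bb -> B \subset E -> Ba \subset Ea ->
  (forall t, t \in Ea -> t \in Bb -> t = p) -> #|Ba| = r -> #|B| = rt ->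
  (r <= rt)%N ->
  comp p r rt (indic R E B) e = ((val e \in Ba)%:R : R).
Proof.
move=> dB sBE sBa hab cBa cB rrt.
have gB : forall t, gext (indic R E B) t = (t \in B)%:R.
  move=> t; rewrite gext_indic; case tB: (t \in B); last by rewrite andbF.
  by rewrite (subsetP sBE _ tB).
rewrite /comp; case: eqP => [ep|enp].
  rewrite (eq_bigr _ (fun t _ => gB t)) sum_indic.
  rewrite (eq_bigr _ (fun t _ => gB t)) sum_indic_in.
  have -> : (Ea :\ p) :&: B = Ba :\ p.
    apply/setP => t; rewrite !inE dB inE.
    case: (eqVneq t p) => //= tp.
    case tBa: (t \in Ba); first by rewrite (subsetP sBa _ tBa).
    by case tEa: (t \in Ea) => //=; apply/negP => /(hab _ tEa) /eqP; rewrite (negbTE tp).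
  have -> : (r%:R / rt%:R) * (#|B|%:R : R) = r%:R.
    rewrite cB; case: (posnP rt) => [rt0|rtp].
      by move: rrt; rewrite rt0 leqn0 => /eqP ->; rewrite !mul0r.
    by rewrite mulfVK // pnatr_eq0 -lt0n.
  move: cBa; rewrite (cardsD1 p Ba) -ep => <-.
  by rewrite natrD addrK.
rewrite gB dB inE; case tBa: (val e \in Ba) => //=.
by case tBb: (val e \in Bb) => //; case: enp; apply: hab => //; exact: valP.
Qed.

Definition K (R : fieldType) (u v : bool) (al be : R) : R :=
  if u then (if v then 0 else (1 - be)^-1)
  else (if v then (1 - al)^-1 else (1 - al - be) / ((1 - al) * (1 - be))).

Lemma K_sym (R : fieldType) u v (al be : R) : K u v al be = K v u be al.
Proof.
rewrite /K; case: u; case: v => //.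
by rewrite (mulrC (1 - be)) (addrAC 1 (- be)).
Qed.

Lemma sum_split (R : numFieldType) (I : finType) (A : pred I) (a : I -> R) (q : I -> bool) :
  \sum_(j | A j) a j = 1 ->
  \sum_(j | A j) a j * (~~ q j)%:R = 1 - \sum_(j | A j) a j * (q j)%:R.
Proof.
move=> s1; rewrite -s1 -sumrB; rewrite s1; apply: eq_bigr => j _.
by case: (q j) => /=; rewrite ?mulr1 ?mulr0 ?subrr ?subr0.
Qed.

Lemma term_le (R : numFieldType) (I : finType) (A : pred I) (a : I -> R) i :
  (forall j, 0 <= a j) -> A i -> a i <= \sum_(j | A j) a j.
Proof.
move=> a0 Ai; rewrite (bigD1 i) //= lerDl; exact: sumr_ge0.
Qed.

Lemma marg (R : realFieldType) (I : finType) (A1 A2 : pred I) (a b : I -> R)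
  (q : I -> bool) (i : I) :
  (forall j, 0 <= a j) -> (forall j, 0 <= b j) ->
  \sum_(j | A1 j) a j = 1 -> \sum_(j | A2 j) b j = 1 ->
  \sum_(j | A1 j) a j * (q j)%:R + \sum_(j | A2 j) b j * (q j)%:R <= 1 -> A1 i ->
  a i * \sum_(j | A2 j) b j * K (q i) (q j) (\sum_(j | A1 j) a j * (q j)%:R)
                                           (\sum_(j | A2 j) b j * (q j)%:R) = a i.
Proof.
move=> a0 b0 sa sb cut Ai.
set al := \sum_(j | A1 j) a j * (q j)%:R in cut *.
set be := \sum_(j | A2 j) b j * (q j)%:R in cut *.
have al0 : 0 <= al by apply: sumr_ge0 => j _; rewrite mulr_ge0.
have be0 : 0 <= be by apply: sumr_ge0 => j _; rewrite mulr_ge0.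
have nbe := sum_split q sb; have nal := sum_split q sa.
rewrite -/al in nal; rewrite -/be in nbe.
have ai0 : 0 <= a i by [].
rewrite (bigID q) /=.
have -> : \sum_(j | A2 j && q j) b j * K (q i) (q j) al be
          = be * K (q i) true al be.
  rewrite /be big_mkcondr /= mulr_suml; apply: eq_bigr => j _.
  by case: (q j) => /=; rewrite ?mulr1n ?mulr0n ?mulr1 ?mulr0 ?mul0r.
have -> : \sum_(j | A2 j && ~~ q j) b j * K (q i) (q j) al be
          = (1 - be) * K (q i) false al be.
  rewrite -nbe big_mkcondr /= mulr_suml; apply: eq_bigr => j _.
  by case: (q j) => /=; rewrite ?mulr1n ?mulr0n ?mulr1 ?mulr0 ?mul0r.
rewrite /K; case qi: (q i).
  rewrite mulr0 add0r.
  have [be1|be1] := eqVneq be 1.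
    have h : a i <= al.
      have := @term_le _ _ A1 (fun j => a j * (q j)%:R) i
         (fun j => mulr_ge0 (a0 j) (ler0n _ _)) Ai.
      by rewrite qi mulr1.
    have : a i <= 0 by move: cut; rewrite be1; lra.
    move=> h2; have -> : a i = 0 by apply/eqP; rewrite eq_le h2 ai0.
    by rewrite mul0r.
  by rewrite divff ?mulr1 // subr_eq0 eq_sym.
have [al1|al1] := eqVneq al 1.
  have : a i <= 1 - al.
    have := @term_le _ _ A1 (fun j => a j * (~~ q j)%:R) i
         (fun j => mulr_ge0 (a0 j) (ler0n _ _)) Ai.
    by rewrite qi mulr1 nal.
  rewrite al1 subrr => h2; have -> : a i = 0 by apply/eqP; rewrite eq_le h2 ai0.
  by rewrite mul0r.
have [be1|be1] := eqVneq be 1.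
  rewrite be1 subrr mul0r addr0 mul1r.
  have -> : al = 0 by move: cut; rewrite be1 => h; apply/eqP; rewrite eq_le al0; lra.
  by rewrite subr0 invr1 mulr1.
have h1 : 1 - al != 0 by rewrite subr_eq0 eq_sym.
have h2 : 1 - be != 0 by rewrite subr_eq0 eq_sym.
rewrite [X in _ * X](_ : _ = 1) ?mulr1 //.
by field; apply/andP.
Qed.

Lemma comp_sum (R : numFieldType) (T : finType) (E : {set T}) (p : T)
  (Ea : {set T}) (r rt : nat) (I : finType) (P : pred I) (c : I -> R)
  (F : I -> {ffun {x : T | x \in E} -> R^o}) (e : {x : T | x \in Ea}) :
  comp p r rt (\sum_(i | P i) c i *: F i) e = \sum_(i | P i) c i * comp p r rt (F i) e.
Proof.
rewrite /comp; case: ifP => _; last exact: gext_sum.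
rewrite (eq_bigr _ (fun t _ => gext_sum P c F t)).
rewrite [X in _ - X](eq_bigr _ (fun t _ => gext_sum P c F t)).
rewrite [X in _ * X]exchange_big [X in _ - X]exchange_big /=.
rewrite mulr_sumr -sumrB; apply: eq_bigr => i _.
by rewrite -!mulr_sumr mulrBr mulrCA.
Qed.

Lemma comp_lin (R : numFieldType) (T : finType) (E : {set T}) (p : T)
  (Ea : {set T}) (r rt : nat) (a : R) (u v : {ffun {x : T | x \in E} -> R^o})
  (e : {x : T | x \in Ea}) :
  comp p r rt (a *: u + v) e = a * comp p r rt u e + comp p r rt v e.
Proof.
rewrite /comp; case: ifP => _; last exact: gext_lin.
rewrite (eq_bigr _ (fun t _ => gext_lin a u v t)).
rewrite [X in _ - X](eq_bigr _ (fun t _ => gext_lin a u v t)).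
rewrite !big_split /= -!mulr_sumr.
set s1 := \sum_t _; set s2 := \sum_t _; set s3 := \sum_(i in _) _; set s4 := \sum_(i in _) _.
ring.
Qed.

Definition fmap (R : numFieldType) (T : finType) (E1 E2 : {set T}) (p : T) (r1 r2 : nat)
  (x : {ffun {x : T | x \in E1 :|: E2} -> R^o}) : dsum_vec R E1 E2 :=
  [ffun s => match s with
             | inl e => comp p r1 (r1 + r2) x e
             | inr e => comp p r2 (r1 + r2) x e end].
Arguments fmap {R T} E1 E2 p r1 r2 x.

Definition pairv (R : numDomainType) (T : finType) (E1 E2 : {set T}) (B1 B2 : {set T})
  : dsum_vec R E1 E2 :=
  [ffun s => match s with
             | inl e => ((val e \in B1)%:R : R)
             | inr e => ((val e \in B2)%:R : R) end].
Arguments pairv {R T} E1 E2 B1 B2.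

Lemma fmap_sum (R : numFieldType) (T : finType) (E1 E2 : {set T}) (p : T) (r1 r2 : nat)
  (I : finType) (P : pred I) (c : I -> R)
  (F : I -> {ffun {x : T | x \in E1 :|: E2} -> R^o}) :
  fmap E1 E2 p r1 r2 (\sum_(i | P i) c i *: F i)
  = \sum_(i | P i) c i *: fmap E1 E2 p r1 r2 (F i).
Proof.
apply/ffunP => -[e|e]; rewrite ffunE sum_ffunE comp_sum; apply: eq_bigr => i _;
  by rewrite !ffunE.
Qed.

Lemma convB_push (R : numDomainType) (T : finType) (E : {set T}) (Bs : {set {set T}})
  (I : finType) (A : pred I) (c : I -> R) (h : I -> {set T}) :
  (forall i, A i -> h i \in Bs) -> (forall i, 0 <= c i) -> \sum_(i | A i) c i = 1 ->
  convB E Bs (\sum_(i | A i) c i *: indic R E (h i)).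
Proof.
move=> hB c0 c1; exists (fun B => \sum_(i | A i && (h i == B)) c i); split.
- by move=> B; apply: sumr_ge0.
- by rewrite -c1 (partition_big h (fun B => B \in Bs)).
- rewrite (partition_big h (fun B => B \in Bs)) //; apply: eq_bigr => B _.
  by rewrite scaler_suml; apply: eq_bigr => i /andP[_ /eqP ->].
Qed.

Lemma vertex (R : numFieldType) (T : finType) (E1 E2 : {set T}) (Bs1 Bs2 : {set {set T}})
  (p : T) (B1 B2 : {set T}) :
  is_matroid E1 Bs1 -> is_matroid E2 Bs2 -> E1 :&: E2 = [set p] ->
  B1 \in Bs1 -> B2 \in Bs2 -> [disjoint B1 & B2] ->
  fmap E1 E2 p (rk Bs1) (rk Bs2) (indic R (E1 :|: E2) (B1 :|: B2)) = pairv E1 E2 B1 B2.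
Proof.
move=> M1 M2 hI b1 b2 dis.
have s1 : B1 \subset E1 by case: M1 => _ h _; apply: h.
have s2 : B2 \subset E2 by case: M2 => _ h _; apply: h.
have hp : forall t, t \in E1 -> t \in E2 -> t = p.
  by move=> t t1 t2; apply/set1P; rewrite -hI inE t1.
have cU : #|B1 :|: B2| = (rk Bs1 + rk Bs2)%N.
  have := cardsUI B1 B2.
  rewrite (disjoint_setI0 dis) cards0 addn0 => ->.
  by rewrite (rkE M1 b1) (rkE M2 b2).
apply/ffunP => -[e|e]; rewrite !ffunE.
  apply: compV => //.
  - by apply: setUSS.
  - by move=> t tE tB; apply: hp => //; apply: (subsetP s2).
  - exact: rkE M1 b1.
  - exact: leq_addr.
apply: (@compV _ _ _ _ _ (B1 :|: B2) B2 B1) => //.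
- by rewrite setUC.
- by apply: setUSS.
- by move=> t tE tB; apply: hp => //; apply: (subsetP s1).
- exact: rkE M2 b2.
- exact: leq_addl.
Qed.

Lemma K_ge0 (R : realFieldType) u v (al be : R) :
  0 <= al -> 0 <= be -> al + be <= 1 -> 0 <= K u v al be.
Proof.
move=> a0 b0 c; rewrite /K.
have h1 : 0 <= 1 - al by lra.
have h2 : 0 <= 1 - be by lra.
case: u; case: v => //; rewrite ?invr_ge0 //.
by apply: divr_ge0; [lra | apply: mulr_ge0].
Qed.

Lemma sumP (R : realFieldType) (T : finType) (E1 E2 : {set T})
  (Bs1 Bs2 : {set {set T}}) x :
  is_matroid E1 Bs1 -> is_matroid E2 Bs2 ->
  convB (E1 :|: E2) (series_bases Bs1 Bs2) x ->
  \sum_(t : T) gext x t = ((rk Bs1 + rk Bs2)%N%:R : R).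
Proof.
move=> M1 M2 [c [c0 c1 ->]].
rewrite (eq_bigr _ (fun t _ => gext_sum _ c _ t)) exchange_big /=.
rewrite -[RHS]mul1r -[X in X * _]c1 mulr_suml; apply: eq_bigr => B /imset2P[B1 B2 b1].
rewrite inE => /andP[b2 dis] ->.
rewrite -mulr_sumr; congr (_ * _).
have s1 : B1 \subset E1 by case: M1 => _ h _; apply: h.
have s2 : B2 \subset E2 by case: M2 => _ h _; apply: h.
rewrite (eq_bigr (fun t => ((t \in B1 :|: B2)%:R : R))); last first.
  move=> t _; rewrite gext_indic; case tB: (t \in B1 :|: B2); last by rewrite andbF.
  by rewrite (subsetP (setUSS s1 s2) _ tB).
rewrite sum_indic; have := cardsUI B1 B2.
rewrite (disjoint_setI0 dis) cards0 addn0 => ->.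
by rewrite (rkE M1 b1) (rkE M2 b2).
Qed.

Theorem lemma3p6 (R : realFieldType) (T : finType) (E1 E2 : {set T})
  (Bs1 Bs2 : {set {set T}}) (p : T)
  (p1 : {x : T | x \in E1}) (p2 : {x : T | x \in E2}) :
  is_matroid E1 Bs1 -> is_matroid E2 Bs2 ->
  E1 :&: E2 = [set p] ->
  ~ (is_coloop Bs1 p /\ is_coloop Bs2 p) ->
  val p1 = p -> val p2 = p ->
  lin_iso (base_polytope R (E1 :|: E2) (series_bases Bs1 Bs2))
          (prod_cut (base_polytope R E1 Bs1) (base_polytope R E2 Bs2) p1 p2).
Proof.
move=> M1 M2 hI _ vp1 vp2.
have sub1 : forall B, B \in Bs1 -> B \subset E1 by case: M1.
have sub2 : forall B, B \in Bs2 -> B \subset E2 by case: M2.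
have subS : forall B, B \in series_bases Bs1 Bs2 -> B \subset E1 :|: E2.
  move=> B /imset2P[B1 B2 b1]; rewrite inE => /andP[b2 _] ->.
  by apply: setUSS; [apply: sub1 | apply: sub2].
exists (fmap E1 E2 p (rk Bs1) (rk Bs2)); split.
- move=> a u v; apply/ffunP => -[e|e]; by rewrite !ffunE comp_lin.
- move=> x y /(bp_convB _ subS) hx /(bp_convB _ subS) hy /ffunP e.
  have gt : forall t, t != p -> gext x t = gext y t.
    move=> t tp; case t1: (t \in E1).
      by have := e (inl (exist _ t t1)); rewrite !ffunE /comp /= (negbTE tp).
    case t2: (t \in E2).
      by have := e (inr (exist _ t t2)); rewrite !ffunE /comp /= (negbTE tp).
    by rewrite /gext; case: insubP => // u; rewrite inE t1 t2.
  have gp : gext x p = gext y p.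
    have Sx := sumP M1 M2 hx; have Sy := sumP M1 M2 hy.
    rewrite (bigD1 p) //= in Sx; rewrite (bigD1 p) //= in Sy.
    rewrite (eq_bigr _ (fun t => gt t)) in Sx.
    by apply: (addIr (\sum_(i | i != p) gext y i)); rewrite Sx Sy.
  apply/ffunP => u; rewrite -!gext_val.
  by case: (eqVneq (val u) p) => [->|/gt].
move=> y; split.
- case => /(bp_convB _ sub1) [a [a0 a1 ya]] /(bp_convB _ sub2) [b [b0 b1 yb]] cut.
  have ya' : forall e, y (inl e) = \sum_(B in Bs1) a B * (val e \in B)%:R.
    move=> e; move/ffunP: ya => /(_ e); rewrite !ffunE sum_ffunE => ->.
    by apply: eq_bigr => B _; rewrite !ffunE.
  have yb' : forall e, y (inr e) = \sum_(B in Bs2) b B * (val e \in B)%:R.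
    move=> e; move/ffunP: yb => /(_ e); rewrite !ffunE sum_ffunE => ->.
    by apply: eq_bigr => B _; rewrite !ffunE.
  rewrite ya' yb' vp1 vp2 in cut.
  set q := fun B : {set T} => p \in B.
  set al := \sum_(B in Bs1) a B * (q B)%:R in cut.
  set be := \sum_(B in Bs2) b B * (q B)%:R in cut.
  set w := fun pr : {set T} * {set T} => a pr.1 * b pr.2 * K (q pr.1) (q pr.2) al be.
  set A := fun pr : {set T} * {set T} =>
     [&& pr.1 \in Bs1, pr.2 \in Bs2 & [disjoint pr.1 & pr.2]].
  have al0 : 0 <= al by apply: sumr_ge0 => j _; rewrite mulr_ge0.
  have be0 : 0 <= be by apply: sumr_ge0 => j _; rewrite mulr_ge0.
  have w0 : forall pr, 0 <= w pr.
    by move=> pr; rewrite /w !mulr_ge0 // K_ge0.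
  have dropA : forall F : {set T} * {set T} -> R,
      \sum_(pr | A pr) w pr * F pr
      = \sum_(B1 in Bs1) \sum_(B2 in Bs2) w (B1, B2) * F (B1, B2).
    move=> F; rewrite pair_big /=; symmetry.
    rewrite (bigID (fun pr : {set T} * {set T} => [disjoint pr.1 & pr.2])) /=.
    rewrite [X in _ + X = _]big1 ?addr0; last first.
      move=> [B1 B2] /= /andP[/andP[m1 m2] nd].
      have [t] : exists t, t \in B1 :&: B2.
        by apply/set0Pn; rewrite setI_eq0.
      rewrite inE => /andP[t1 t2].
      have tp : t = p.
        by apply/set1P; rewrite -hI inE (subsetP (sub1 _ m1) _ t1) (subsetP (sub2 _ m2) _ t2).
      by rewrite /w /K /q /= -tp t1 t2 mulr0 mul0r.
    by apply: eq_big => [[B1 B2]|[B1 B2] _] //=; rewrite /A /= andbA.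
  have marg1 : forall g : {set T} -> R,
      \sum_(pr | A pr) w pr * g pr.1 = \sum_(B in Bs1) a B * g B.
    move=> g; rewrite dropA; apply: eq_bigr => B1 m1.
    rewrite -[in RHS](@marg R _ (fun B => B \in Bs1) (fun B => B \in Bs2) a b q B1
                        a0 b0 a1 b1 cut m1).
    rewrite mulr_sumr mulr_suml; apply: eq_bigr => B2 _.
    by rewrite /w /= !mulrA.
  have marg2 : forall g : {set T} -> R,
      \sum_(pr | A pr) w pr * g pr.2 = \sum_(B in Bs2) b B * g B.
    move=> g; rewrite dropA exchange_big /=; apply: eq_bigr => B2 m2.
    have cut' : be + al <= 1 by rewrite addrC.
    rewrite -[in RHS](@marg R _ (fun B => B \in Bs2) (fun B => B \in Bs1) b a q B2
                        b0 a0 b1 a1 cut' m2).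
    rewrite mulr_sumr mulr_suml; apply: eq_bigr => B1 _.
    rewrite /w /= K_sym; rewrite -/al -/be.
    by rewrite mulrCA !mulrA.
  exists (\sum_(pr | A pr) w pr *: indic R (E1 :|: E2) (pr.1 :|: pr.2)).
    apply/(bp_convB _ subS); apply: convB_push => //.
      move=> pr /and3P[m1 m2 d]; apply/imset2P; exists pr.1 pr.2 => //.
      by rewrite inE m2.
    have := marg1 (fun _ => 1); rewrite (eq_bigr _ (fun i _ => mulr1 (w i))) => ->.
    by rewrite (eq_bigr _ (fun i _ => mulr1 (a i))).
  rewrite fmap_sum.
  rewrite (eq_bigr (fun pr => w pr *: pairv E1 E2 pr.1 pr.2)); last first.
    by move=> pr /and3P[m1 m2 d]; rewrite vertex.
  apply/ffunP => -[e|e]; rewrite sum_ffunE.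
    rewrite ya' -(marg1 (fun B => (val e \in B)%:R)).
    by apply: eq_bigr => pr _; rewrite !ffunE.
  rewrite yb' -(marg2 (fun B => (val e \in B)%:R)).
  by apply: eq_bigr => pr _; rewrite !ffunE.
- case=> x /(bp_convB _ subS) [c [c0 c1 ->]] <-.
  set A := fun pr : {set T} * {set T} =>
     [&& pr.1 \in Bs1, pr.2 \in Bs2 & [disjoint pr.1 & pr.2]].
  set dec := fun B : {set T} =>
     odflt (set0, set0) [pick pr | A pr && (B == pr.1 :|: pr.2)].
  have decP : forall B, B \in series_bases Bs1 Bs2 ->
      A (dec B) /\ B = (dec B).1 :|: (dec B).2.
    move=> B hB; rewrite /dec; case: pickP => [pr /andP[hA /eqP ->] //|].
    case/imset2P: hB => B1 B2 b1; rewrite inE => /andP[b2 d] eB.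
    by move/(_ (B1, B2)); rewrite /A /= b1 b2 d eB eqxx.
  rewrite fmap_sum.
  rewrite (eq_bigr (fun B => c B *: pairv E1 E2 (dec B).1 (dec B).2)); last first.
    move=> B hB; move: (decP B hB); case: (dec B) => B1 B2 /= [/and3P[b1 b2 d] eB].
    by rewrite eB vertex.
  split.
  + apply/(bp_convB _ sub1).
    have -> : [ffun e => (\sum_(B in series_bases Bs1 Bs2)
                 c B *: pairv E1 E2 (dec B).1 (dec B).2) (inl e)]
              = \sum_(B in series_bases Bs1 Bs2) c B *: indic R E1 (dec B).1.
      apply/ffunP => e; rewrite !ffunE !sum_ffunE; apply: eq_bigr => B _.
      by rewrite !ffunE.
    by apply: convB_push => // B /decP [/and3P[]].
  + apply/(bp_convB _ sub2).
    have -> : [ffun e => (\sum_(B in series_bases Bs1 Bs2)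
                 c B *: pairv E1 E2 (dec B).1 (dec B).2) (inr e)]
              = \sum_(B in series_bases Bs1 Bs2) c B *: indic R E2 (dec B).2.
      apply/ffunP => e; rewrite !ffunE !sum_ffunE; apply: eq_bigr => B _.
      by rewrite !ffunE.
    by apply: convB_push => // B /decP [/and3P[_ ? _] _].
  + rewrite !sum_ffunE -big_split /= -c1; apply: ler_sum => B hB.
    rewrite !ffunE -mulrDr; apply: ler_piMr => //.
    move: (decP B hB) => [/and3P[_ _ d] _].
    rewrite vp1 vp2; case h1: (p \in (dec B).1).
      have h2 : (p \in (dec B).2) = false by apply: (disjointFr d).
      by rewrite h2 /= mulr1n mulr0n addr0.
    by rewrite /= mulr0n add0r; case: (p \in (dec B).2); rewrite /= ?mulr1n ?mulr0n ?ler01.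
Qed.
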